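(* No sequence $X\in\{\mathsf{T},\mathsf{S}\}^*$ is both transitive and minimal in $\{\mathsf{T},\mathsf{S}\}^*$.
   Context: Fix attribute–taxonomy pairs $A_1{:}T_1,\dots,A_d{:}T_d$ with distinct attribute names, where each taxonomy $T_i=(V_i,\le_{V_i})$ is a poset. A t-tuple over a t-schema $S\subseteq\{A_1{:}T_1,\dots,A_d{:}T_d\}$ maps each $A_i$ in $S$ to a value of $V_i$; $\mathcal{D}$ is the set of all t-tuples over all such t-schemas. A preference relation is a binary relation $\succeq$ on $\mathcal{D}$; its strict part is $t_1\succ t_2$ iff $t_1\succeq t_2$ and not $t_2\succeq t_1$. Preferences are given by a formula $F(x,y)=\bigvee_i P_i(x,y)$, a disjunction of statements; each statement $P_i$ is a disjunction of clauses, each clause a satisfiable conjunction of atoms of the forms $x[A_i]\le_{V_i} v$, $x[A_i]\not\le_{V_i} v$, $y[A_i]\le_{V_i} v$, $y[A_i]\not\le_{V_i} v$; the formula induces $t_1\succeq t_2\iff F(t_1,t_2)$. Operator $\mathsf{T}$ maps a formula to one inducing the transitive closure over $\mathcal{D}$ of the induced relation. Operator $\mathsf{S}$ (specificity-based refinement): repeat rounds; in a round, for each statement $P_i$ let $\mathrm{Impl}(P_i)$ be the set of statements $P_j$ such that $P_j(t_2,t_1)\Rightarrow P_i(t_1,t_2)$ for all $t_1,t_2\in\mathcal{D}$ but not conversely; simultaneously replace every $P_i$ with nonempty $\mathrm{Impl}(P_i)$ by $P_i(x,y)\wedge\bigwedge_{P_j\in \mathrm{Impl}(P_i)}\neg P_j(y,x)$;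 stop when no $\mathrm{Impl}$ set is nonempty. After each operator, contradictory clauses and subsumed statements are removed. For $X\in\{\mathsf{T},\mathsf{S}\}^*$, $\succeq_X$ (strict part $\succ_X$) is the relation induced by applying the operators of $X$ in order to the initial formula. Containment $X\sqsubseteq Y$ means $\succeq_X\subseteq\succeq_Y$ for every initial preference formula; $X\equiv Y$ means both containments. A sequence $X$ is transitive if $\succ_X$ is transitive for every initial preference formula. A sequence $X$ is minimal in a set $\Sigma$ if $X\in\Sigma$ and there is no $Y\in\Sigma$ with $Y\not\equiv X$ and $Y\sqsubseteq X$. *)

(* Defs.v *)
From mathcomp Require Import all_boot.
From Stdlib Require Import List.

Set Implicit Arguments.
Unset Strict Implicit.
Unset Printing Implicit Defensive.

(* Attribute A_i is represented by its index i : 'I_d.                 *)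
Unset Implicit Arguments.
Record Taxonomies := {
  tx_d : nat;
  tx_V : 'I_tx_d -> Type;
  tx_le : forall i, tx_V i -> tx_V i -> Prop;
  tx_refl : forall i (a : tx_V i), tx_le i a a;
  tx_trans : forall i (a b c : tx_V i), tx_le i a b -> tx_le i b c -> tx_le i a c;
  tx_antisym : forall i (a b : tx_V i), tx_le i a b -> tx_le i b a -> a = b
}.
Set Implicit Arguments.

(* A t-tuple over a t-schema S: attribute i is in S iff the entry is   *)
(* Some v.  The type of all such tuples (over all schemas) is D.       *)
Definition ttuple (tx : Taxonomies) : Type :=
  forall i : 'I_(tx_d tx), option (tx_V tx i).

Definition relD (D : Type) := D -> D -> Prop.

Inductive atom (tx : Taxonomies) : Type :=
  | XLe  (i : 'I_(tx_d tx)) (v : tx_V tx i)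
  | XNle (i : 'I_(tx_d tx)) (v : tx_V tx i)
  | YLe  (i : 'I_(tx_d tx)) (v : tx_V tx i)
  | YNle (i : 'I_(tx_d tx)) (v : tx_V tx i).

Definition clause (tx : Taxonomies) := list (atom tx).      (* conjunction *)
Definition statement (tx : Taxonomies) := list (clause tx). (* disjunction *)
Definition formula (tx : Taxonomies) := list (statement tx). (* disjunction *)

Definition holds_le (tx : Taxonomies) (t : ttuple tx) i (v : tx_V tx i) : Prop :=
  match t i with Some a => tx_le tx i a v | None => False end.
Definition holds_nle (tx : Taxonomies) (t : ttuple tx) i (v : tx_V tx i) : Prop :=
  match t i with Some a => ~ tx_le tx i a v | None => False end.

Definition atom_sem (tx : Taxonomies) (a : atom tx) : relD (ttuple tx) :=
  fun x y =>
    match a with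
    | XLe i v => holds_le x v
    | XNle i v => holds_nle x v
    | YLe i v => holds_le y v
    | YNle i v => holds_nle y v
    end.

Definition clause_sem (tx : Taxonomies) (c : clause tx) : relD (ttuple tx) :=
  fun x y => forall a, In a c -> atom_sem a x y.

Definition statement_sem (tx : Taxonomies) (p : statement tx) : relD (ttuple tx) :=
  fun x y => exists c, In c p /\ clause_sem c x y.

Definition wf_formula (tx : Taxonomies) (F : formula tx) : Prop :=
  forall p c, In p F -> In c p -> exists x y, clause_sem c x y.

(* Formulas seen as (indexed) families of statements, each statement   *)
(* represented by the binary relation it defines on D.                 *)
Record sform (D : Type) := SForm {
  sf_idx : Type;
  sf_st : sf_idx -> relD D
}.

Definition induced (D : Type) (F : sform D) : relD D :=
  fun x y => exists i, @sf_st D F i x y.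

Definition of_formula (tx : Taxonomies) (F : formula tx) : sform (ttuple tx) :=
  @SForm _ 'I_(size F) (fun k => statement_sem (seq.nth nil F k)).

Definition incl (D : Type) (P Q : relD D) : Prop := forall x y, P x y -> Q x y.
Definition strict_incl (D : Type) (P Q : relD D) : Prop := incl P Q /\ ~ incl Q P.

(* Removal of contradictory (unsatisfiable) clauses
   does not change the relation defined by a statement, hence is implicit
   in the relational representation of statements. *)
Definition remove_subsumed (D : Type) (F : sform D) : sform D :=
  @SForm D {i : sf_idx F | ~ exists j, strict_incl (@sf_st D F i) (@sf_st D F j)}
           (fun i => @sf_st D F (proj1_sig i)).

(* Operator T: the statements of the result are the compositions
   P_{i1} o ... o P_{ik} (k >= 1) of statements of the input; the induced
   relation is the transitive closure of the input one. *)
Fixpoint compose_seq (D : Type) (I : Type) (st : I -> relD D) (s : list I) : relD D :=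
  match s with
  | nil => fun x y => x = y
  | i :: s' => fun x y => exists z, st i x z /\ compose_seq st s' z y
  end.

Definition opT (D : Type) (F : sform D) : sform D :=
  remove_subsumed
    (@SForm D {s : list (sf_idx F) | s <> nil}
              (fun s => compose_seq (@sf_st D F) (proj1_sig s))).

Definition Impl (D : Type) (I : Type) (st : I -> relD D) (i j : I) : Prop :=
  (forall t1 t2, st j t2 t1 -> st i t1 t2) /\
  ~ (forall t1 t2, st i t1 t2 -> st j t2 t1).

Definition S_round (D : Type) (I : Type) (st : I -> relD D) : I -> relD D :=
  fun i x y => st i x y /\ forall j, Impl st i j -> ~ st j y x.

(* Rounds are repeated until no Impl set is nonempty; since rounds only
   shrink statements and a round with all Impl sets empty is the identity,
   the final result is the statement-wise intersection over all rounds. *)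
Definition opS (D : Type) (F : sform D) : sform D :=
  remove_subsumed
    (@SForm D (sf_idx F)
       (fun i x y => forall n, iter n (@S_round D (sf_idx F)) (@sf_st D F) i x y)).

Inductive op := OpT | OpS.

Definition apply_ops (D : Type) (X : list op) (F : sform D) : sform D :=
  fold_left (fun G o => match o with OpT => opT G | OpS => opS G end) X F.

Definition pref (X : list op) (tx : Taxonomies) (F : formula tx) : relD (ttuple tx) :=
  induced (apply_ops X (of_formula F)).

Definition strict_part (D : Type) (R : relD D) : relD D :=
  fun x y => R x y /\ ~ R y x.

Definition transitive_rel (D : Type) (R : relD D) : Prop :=
  forall x y z, R x y -> R y z -> R x z.

Definition contained (X Y : list op) : Prop :=
  forall (tx : Taxonomies) (F : formula tx), wf_formula F ->
    incl (pref X F) (pref Y F).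

Definition equiv_seq (X Y : list op) : Prop := contained X Y /\ contained Y X.

Definition transitive_seq (X : list op) : Prop :=
  forall (tx : Taxonomies) (F : formula tx), wf_formula F ->
    transitive_rel (strict_part (pref X F)).

Definition minimal_seq (X : list op) : Prop :=
  ~ exists Y : list op, ~ equiv_seq Y X /\ contained Y X.

(* Main.v *)
Require Import Defs.
From mathcomp Require Import all_boot.

Set Implicit Arguments. Unset Strict Implicit. Unset Printing Implicit Defensive.

Definition rd := seq bool.
Definition dom := iota 0 4.
Definition get (r : rd) (a b : nat) : bool := nth false r (4 * a + b).
Definition mk (f : nat -> nat -> bool) : rd :=
  flatten [seq [seq f a b | b <- dom] | a <- dom].
Definition comp (r s : rd) : rd :=
  mk (fun a b => has (fun c => get r a c && get s c b) dom).
Definition tr (r : rd) : rd := mk (fun a b => get r b a).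
Definition sub (r s : rd) : bool :=
  all (fun a => all (fun b => get r a b ==> get s a b) dom) dom.
Definition implc (r s : rd) : bool := sub (tr s) r && ~~ sub r (tr s).
Definition rnd (L : seq rd) (r : rd) : rd :=
  mk (fun a b => get r a b && all (fun s => ~~ implc r s || ~~ get s b a) L).
Definition rs (L : seq rd) : seq rd := map (rnd L) L.
Definition maxc (L : seq rd) : seq rd :=
  [seq r <- L | ~~ has (fun s => sub r s && ~~ sub s r) L].
Definition step (L C : seq rd) : seq rd :=
  undup (C ++ [seq comp r c | r <- L, c <- C]).
Definition clos (L : seq rd) (n : nat) : seq rd := iter n (step L) L.
Definition closed (L C : seq rd) : bool :=
  all (fun r => all (fun c => comp r c \in C) C) L.
Definition seteq (A B : seq rd) : bool := all (fun r => r \in B) A && all (fun r => r \in A) B.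
Definition fixd (L : seq rd) : bool := all (fun r => rnd L r == r) L.
Definition uni (L : seq rd) (a b : nat) : bool := has (fun r => get r a b) L.

Definition rect (A B : seq nat) : rd := mk (fun a b => (a \in A) && (b \in B)).
Definition L0 : seq rd := [:: rect [:: 2; 3] [:: 0; 3]; rect [:: 1; 3] [:: 1]; rect [:: 0; 1] [:: 2; 3]].
Definition LW : seq rd := maxc (clos L0 4).
Definition LV : seq rd := maxc (iter 3 rs LW).


Definition tx4 : Taxonomies :=
  @Build_Taxonomies 1 (fun _ => 'I_4) (fun _ a b => a = b)
    (fun _ a => erefl a) (fun _ a b c h1 h2 => etrans h1 h2) (fun _ a b h _ => h).

Notation D := (ttuple tx4).
Definition pt (x : D) : option 'I_4 := x ord0.
Definition tup (a : 'I_4) : D := fun _ => Some a.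
Definition denb (r : rd) (x y : D) : bool :=
  match pt x, pt y with Some a, Some b => get r a b | _, _ => false end.
Definition den (r : rd) : relD D := fun x y => denb r x y.
Definition eqrel (P Q : relD D) := forall x y, P x y <-> Q x y.

Lemma get_mk f a b : a < 4 -> b < 4 -> get (mk f) a b = f a b.
Proof.
move=> ha hb; case: a ha => [|[|[|[|a]]]] // _; case: b hb => [|[|[|[|b]]]] // _.
Qed.

Lemma in_dom (a : 'I_4) : nat_of_ord a \in dom.
Proof. by rewrite mem_iota /= ltn_ord. Qed.

Lemma den_comp r s x y : (exists z, den r x z /\ den s z y) <-> den (comp r s) x y.
Proof.
rewrite /den /denb /comp.
case Ex: (pt x) => [a|]; case Ey: (pt y) => [b|]; split => //.
- case=> z []; case: (pt z) => [c|] //= h1 h2.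
  rewrite get_mk //; apply/(@hasP _ (fun c => get r a c && get s c b) dom); exists (nat_of_ord c); first exact: in_dom.
  by rewrite h1 h2.
- rewrite get_mk // => /(@hasP _ (fun c => get r a c && get s c b) dom) [c]; rewrite mem_iota => /andP [_ hc] /andP [h1 h2].
  by exists (tup (Ordinal hc)).
- by case=> z []; case: (pt z).
- by case=> z [].
- by case=> z [].
Qed.

Lemma den_tr r x y : den (tr r) x y <-> den r y x.
Proof.
rewrite /den /denb /tr; case: (pt x) => [a|]; case: (pt y) => [b|] //.
by rewrite get_mk.
Qed.

Lemma den_sub r s : (forall x y, den r x y -> den s x y) <-> sub r s.
Proof.
split.
- move=> H; apply/allP => a; rewrite mem_iota => /andP [_ ha].
  apply/allP => b; rewrite mem_iota => /andP [_ hb]; apply/implyP => h.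
  exact: (H (tup (Ordinal ha)) (tup (Ordinal hb)) h).
- move=> /allP H x y; rewrite /den /denb; case: (pt x) => [a|] //; case: (pt y) => [b|] //.
  by move: (allP (H _ (in_dom a)) _ (in_dom b)) => /implyP.
Qed.

Lemma incl_den P Q r s : eqrel P (den r) -> eqrel Q (den s) -> (incl P Q <-> sub r s).
Proof.
move=> HP HQ; rewrite -den_sub; split => H x y.
- by move/HP/H/HQ.
- by move/HP/H/HQ.
Qed.

Lemma Impl_den I (st : I -> relD D) i j r s :
  eqrel (st i) (den r) -> eqrel (st j) (den s) -> (Impl st i j <-> implc r s).
Proof.
move=> Hi Hj.
have E1 : (forall t1 t2, st j t2 t1 -> st i t1 t2) <-> sub (tr s) r.
  rewrite -den_sub; split => H x y.
  - by move/den_tr/Hj/H/Hi.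
  - by move/Hj/den_tr/H/Hi.
have E2 : (forall t1 t2, st i t1 t2 -> st j t2 t1) <-> sub r (tr s).
  rewrite -den_sub; split => H x y.
  - by move/Hi/H/Hj/den_tr.
  - by move/Hi/H/den_tr/Hj.
rewrite /Impl /implc; split.
- case=> [/E1 -> H2] /=; apply/negP => /E2; exact: H2.
- case/andP => /E1 h1 /negP h2; split => // /E2; exact: h2.
Qed.

Definition repr (L : seq rd) (Z : sform D) :=
  (forall i, exists2 r, r \in L & eqrel (@sf_st D Z i) (den r)) /\
  (forall r, r \in L -> exists i, eqrel (@sf_st D Z i) (den r)).

Lemma repr_set L L' Z : repr L Z -> seteq L L' -> repr L' Z.
Proof.
case=> H1 H2 /andP [/allP s1 /allP s2]; split.
- move=> i; case: (H1 i) => r hr e; exists r => //; exact: s1.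
- by move=> r /s2 /H2.
Qed.

Lemma induced_repr L Z x y : repr L Z -> (induced Z x y <-> has (fun r => denb r x y) L).
Proof.
case=> H1 H2; split.
- case=> i h; case: (H1 i) => r hr /(_ x y) [e _].
  by apply/hasP; exists r => //; apply: e.
- case/hasP => r /H2 [i e] h; exists i; exact/e.
Qed.

Lemma repr_rs L Z : repr L Z -> repr (maxc L) (remove_subsumed Z).
Proof.
case=> H1 H2; split.
- case=> i Hi /=; case: (H1 i) => r hr e; exists r => //.
  rewrite mem_filter hr andbT; apply/hasP => -[s hs /andP [h1 h2]].
  apply: Hi; case: (H2 s hs) => j ej; exists j; split.
  + by apply/(incl_den e ej).
  + by move/(incl_den ej e); apply/negP.
- move=> r; rewrite mem_filter => /andP [hn hr]; case: (H2 r hr) => i e.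
  have Hi : ~ exists j, strict_incl (@sf_st D Z i) (@sf_st D Z j).
    case=> j [h1 h2]; case: (H1 j) => s hs ej.
    move/negP: hn; apply; apply/hasP; exists s => //.
    rewrite (proj1 (incl_den e ej) h1) /=; apply/negP => /(incl_den ej e); exact: h2.
  by exists (exist _ i Hi).
Qed.

Lemma cs1 I (st : I -> relD D) i : eqrel (compose_seq st [:: i]) (st i).
Proof. move=> x y /=; split; [by case=> z [h <-] | by move=> h; exists y]. Qed.

Lemma repr_T L Z n : repr L Z -> all (fun r => r \in clos L n) L -> closed L (clos L n) ->
  repr (maxc (clos L n)) (opT Z).
Proof.
move=> [H1 H2] hL /allP hC; apply: repr_rs; split.
- case=> s hs /=; case: s hs => [//|i s] _.
  elim: s i => [|j s IH] i.
  + case: (H1 i) => r hr e; exists r; first by apply: (allP hL).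
    move=> x y; rewrite (cs1 (@sf_st D Z)); exact: e.
  + case: (IH j) => c hc ec; case: (H1 i) => r hr er.
    exists (comp r c); first by apply: (allP (hC r hr)).
    move=> x y; rewrite -den_comp /=; split.
    * case=> z [h1 h2]; exists z; split; [exact/er | exact/ec].
    * case=> z [h1 h2]; exists z; split; [exact/er | exact/ec].
- have Att : forall m c, c \in clos L m -> exists s : seq (sf_idx Z), s <> nil /\
      eqrel (compose_seq (@sf_st D Z) s) (den c).
    elim=> [|m IH] c.
    + move=> /H2 [i e]; exists [:: i]; split => // x y; rewrite (cs1 (@sf_st D Z)); exact: e.
    + rewrite /clos iterS -/(clos L m) /step mem_undup mem_cat => /orP [/IH //|].
      case/allpairsP => -[r c'] /= [hr hc' ->].
      case: (IH c' hc') => s [hs es]; case: (H2 r hr) => i ei.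
      exists (i :: s); split => // x y; rewrite -den_comp /=; split.
      * case=> z [h1 h2]; exists z; split; [exact/ei | exact/es].
      * case=> z [h1 h2]; exists z; split; [exact/ei | exact/es].
  move=> c /(Att n) [s [hs es]]; by exists (exist _ s hs).
Qed.

Lemma round_den I (st : I -> relD D) L i r :
  repr L (SForm st) -> eqrel (st i) (den r) -> eqrel (S_round st i) (den (rnd L r)).
Proof.
case=> H1 H2 e x y; rewrite /S_round /den /denb /rnd.
case Ex: (pt x) => [a|]; case Ey: (pt y) => [b|]; last first.
- by split => // -[/e]; rewrite /den /denb Ex ?Ey.
- by split => // -[/e]; rewrite /den /denb Ex ?Ey.
- by split => // -[/e]; rewrite /den /denb Ex ?Ey.
rewrite get_mk //; split.
- case=> /e; rewrite /den /denb Ex ?Ey => -> /= H.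
  apply/allP => s hs; case: (H2 s hs) => j ej.
  case hi: (implc r s) => //=; apply/negP => hg.
  apply: (H j); first by apply/(Impl_den e ej).
  by apply/ej; rewrite /den /denb Ex ?Ey.
- case/andP => hg /allP H; split; first by apply/e; rewrite /den /denb Ex ?Ey.
  move=> j /=; case: (H1 j) => s hs ej /(Impl_den e ej) hi /ej.
  by rewrite /den /denb Ex ?Ey; move: (H s hs); rewrite hi /= => /negP.
Qed.

Lemma repr_round I (st : I -> relD D) L :
  repr L (SForm st) -> repr (rs L) (SForm (S_round st)).
Proof.
move=> HR; case: (HR) => H1 H2; split.
- move=> i /=; case: (H1 i) => r hr e; exists (rnd L r); first exact: map_f.
  exact: round_den.
- move=> r' /mapP [r hr ->]; case: (H2 r hr) => i e; exists i; exact: round_den.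
Qed.

Lemma repr_iter I (st : I -> relD D) L n :
  repr L (SForm st) -> repr (iter n rs L) (SForm (iter n (@S_round D I) st)).
Proof.
move=> H; elim: n => [//|n IH]; rewrite !iterS; exact: repr_round.
Qed.

Lemma iter_dec I (st : I -> relD D) n m i x y :
  n <= m -> iter m (@S_round D I) st i x y -> iter n (@S_round D I) st i x y.
Proof.
move=> /subnK <-; elim: (m - n) => [//|k IH]; rewrite addSn iterS => -[h _]; exact: IH.
Qed.

Lemma repr_S L Z k : repr L Z -> fixd (iter k rs L) ->
  repr (maxc (iter k rs L)) (opS Z).
Proof.
move=> HR /allP hfix; apply: repr_rs.
set st := @sf_st D Z; set I := sf_idx Z; set Lk := iter k rs L.
have HRs : repr L (SForm st) by case: HR.
have fixL : rs Lk = Lk.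
  rewrite /rs; transitivity (map id Lk); last exact: map_id.
  apply/eq_in_map => r hr; exact/eqP/hfix.
have Hk : forall m, repr Lk (SForm (iter (m + k) (@S_round D I) st)).
  move=> m; have := repr_iter (m + k) HRs; rewrite iterD.
  suff -> : iter m rs (iter k rs L) = Lk by [].
  by elim: m => [//|m IH]; rewrite iterS IH fixL.
have stab : forall m i, eqrel (iter (m + k) (@S_round D I) st i) (iter k (@S_round D I) st i).
  elim=> [//|m IH] i x y; rewrite addSn iterS.
  case: (Hk m) => H1 _; case: (H1 i) => r hr e.
  rewrite (round_den (Hk m) e) (eqP (hfix r hr)) -(e x y); exact: IH.
case: (Hk 0) => H1 H2; split.
- move=> i; case: (H1 i) => r hr e; exists r => // x y /=; rewrite -(e x y) /=; split.
  + by move/(_ k).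
  + move=> h n; case: (leqP n k) => hn; first exact: iter_dec h.
    move/ltnW/subnK: hn => <-; exact/stab.
- move=> r /H2 [i e]; exists i => x y /=; rewrite -(e x y) /=; split.
  + by move/(_ k).
  + move=> h n; case: (leqP n k) => hn; first exact: iter_dec h.
    move/ltnW/subnK: hn => <-; exact/stab.
Qed.

Definition o0 : 'I_4 := @Ordinal 4 0 isT.
Definition o1 : 'I_4 := @Ordinal 4 1 isT.
Definition o2 : 'I_4 := @Ordinal 4 2 isT.
Definition o3 : 'I_4 := @Ordinal 4 3 isT.
Definition i0 : 'I_(tx_d tx4) := ord0.

Definition c1 : clause tx4 := [:: @XNle tx4 i0 o0; @XNle tx4 i0 o1; @YNle tx4 i0 o1; @YNle tx4 i0 o2].
Definition c2 : clause tx4 := [:: @XNle tx4 i0 o0; @XNle tx4 i0 o2; @YLe tx4 i0 o1].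
Definition c3 : clause tx4 := [:: @XNle tx4 i0 o2; @XNle tx4 i0 o3; @YNle tx4 i0 o0; @YNle tx4 i0 o1].
Definition F0 : formula tx4 := [:: [:: c1]; [:: c2]; [:: c3]].

Definition atom_b (a : atom tx4) (x y : D) : bool :=
  match a with
  | XLe i v => if x i is Some u then (u : 'I_4) == v else false
  | XNle i v => if x i is Some u then (u : 'I_4) != v else false
  | YLe i v => if y i is Some u then (u : 'I_4) == v else false
  | YNle i v => if y i is Some u then (u : 'I_4) != v else false
  end.

Lemma atom_ok a x y : atom_sem a x y <-> atom_b a x y.
Proof.
case: a => i v /=; rewrite /holds_le /holds_nle.
- case: (x i) => [u|] //; split; [by move=> ->; rewrite eqxx | by move/eqP].
- case: (x i) => [u|] //; split; [by move=> h; apply/eqP | by move/eqP].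
- case: (y i) => [u|] //; split; [by move=> ->; rewrite eqxx | by move/eqP].
- case: (y i) => [u|] //; split; [by move=> h; apply/eqP | by move/eqP].
Qed.

Lemma clause_ok c x y : clause_sem c x y <-> all (fun a => atom_b a x y) c.
Proof.
rewrite /clause_sem; elim: c => [|a c IH] /=; first by split => // _ a [].
split.
- move=> H; rewrite (proj1 (atom_ok a x y) (H a (or_introl erefl))) /=.
  by apply/IH => b hb; apply: H; right.
- case/andP => ha hc b [<-|hb]; first exact/atom_ok.
  exact: (proj2 IH hc).
Qed.

Lemma stmt_ok c r : (forall x y, all (fun a => atom_b a x y) c = denb r x y) ->
  eqrel (statement_sem [:: c]) (den r).
Proof.
move=> H x y; rewrite /statement_sem /den -H -clause_ok; split.
- by case=> c' [[<-|[]] h].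
- by move=> h; exists c; split => //; left.
Qed.

Lemma enum4 (a : 'I_4) : a = o0 \/ a = o1 \/ a = o2 \/ a = o3.
Proof.
case: a => [[|[|[|[|k]]]] h]; try (by left; apply: val_inj);
  try (by right; left; apply: val_inj); try (by right; right; left; apply: val_inj);
  try (by right; right; right; apply: val_inj).
Qed.

Lemma opt4 (P : option 'I_4 -> Prop) :
  P None -> P (Some o0) -> P (Some o1) -> P (Some o2) -> P (Some o3) -> forall o, P o.
Proof. by move=> hN h0 h1 h2 h3 [a|] //; case: (enum4 a) => [->|[->|[->|->]]]. Qed.

Lemma atom_pt a x y : atom_b a x y = atom_b a (fun _ => pt x) (fun _ => pt y).
Proof. by case: a => i v /=; rewrite /pt (ord1 i). Qed.

Lemma stmt_ok' (c : clause tx4) (r : rd) :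
  (forall ox oy : option 'I_4, all (fun a => atom_b a (fun _ => ox) (fun _ => oy)) c = denb r (fun _ => ox) (fun _ => oy)) ->
  eqrel (statement_sem [:: c]) (den r).
Proof.
move=> H; apply: stmt_ok => x y.
rewrite (eq_all (fun a => atom_pt a x y)) H.
by [].
Qed.

Lemma init_repr : repr L0 (of_formula F0).
Proof.
have e1 : eqrel (statement_sem [:: c1]) (den (rect [:: 2; 3] [:: 0; 3])).
  by apply: stmt_ok' => ox oy; elim/opt4: ox; elim/opt4: oy; vm_compute.
have e2 : eqrel (statement_sem [:: c2]) (den (rect [:: 1; 3] [:: 1])).
  by apply: stmt_ok' => ox oy; elim/opt4: ox; elim/opt4: oy; vm_compute.
have e3 : eqrel (statement_sem [:: c3]) (den (rect [:: 0; 1] [:: 2; 3])).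
  by apply: stmt_ok' => ox oy; elim/opt4: ox; elim/opt4: oy; vm_compute.
split.
- case=> [[|[|[|k]]] hk] /=.
  + by exists (rect [:: 2; 3] [:: 0; 3]).
  + by exists (rect [:: 1; 3] [:: 1]).
  + by exists (rect [:: 0; 1] [:: 2; 3]).
  + by [].
- move=> r; rewrite !inE => /orP [/eqP ->|/orP [/eqP ->|/eqP ->]].
  + by exists (@Ordinal 3 0 isT).
  + by exists (@Ordinal 3 1 isT).
  + by exists (@Ordinal 3 2 isT).
Qed.

Lemma wfF0 : wf_formula F0.
Proof.
move=> p c /=.
have W : forall c' a b, all (fun at0 => atom_b at0 (tup a) (tup b)) c' -> exists x y, clause_sem c' x y.
  by move=> c' a b h; exists (tup a), (tup b); apply/clause_ok.
case=> [<-|[<-|[<-|[]]]] /= [<-|[]].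
- by apply: (W _ o2 o0); vm_compute.
- by apply: (W _ o1 o1); vm_compute.
- by apply: (W _ o0 o2); vm_compute.
Qed.

Definition Inv (Z : sform D) := repr L0 Z \/ repr LW Z \/ repr LV Z.

Lemma f1 : all (fun r => r \in clos L0 4) L0. Proof. by vm_compute. Qed.
Lemma f2 : closed L0 (clos L0 4). Proof. by vm_compute. Qed.
Lemma f3 : fixd (iter 0 rs L0). Proof. by vm_compute. Qed.
Lemma f4 : seteq (maxc (iter 0 rs L0)) L0. Proof. by vm_compute. Qed.
Lemma f5 : all (fun r => r \in clos LW 3) LW. Proof. by vm_compute. Qed.
Lemma f6 : closed LW (clos LW 3). Proof. by vm_compute. Qed.
Lemma f7 : seteq (maxc (clos LW 3)) LW. Proof. by vm_compute. Qed.
Lemma f8 : fixd (iter 3 rs LW). Proof. by vm_compute. Qed.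
Lemma f9 : all (fun r => r \in clos LV 4) LV. Proof. by vm_compute. Qed.
Lemma f10 : closed LV (clos LV 4). Proof. by vm_compute. Qed.
Lemma f11 : seteq (maxc (clos LV 4)) LW. Proof. by vm_compute. Qed.
Lemma f12 : fixd (iter 0 rs LV). Proof. by vm_compute. Qed.
Lemma f13 : seteq (maxc (iter 0 rs LV)) LV. Proof. by vm_compute. Qed.
Lemma f14 : seteq (maxc (clos L0 4)) LW. Proof. by vm_compute. Qed.
Lemma f15 : seteq (maxc (iter 3 rs LW)) LV. Proof. by vm_compute. Qed.

Lemma Inv_step Z o : Inv Z -> Inv (match o with OpT => opT Z | OpS => opS Z end).
Proof.
case: o => -[H|[H|H]].
- right; left; exact: (repr_set (@repr_T L0 Z 4 H f1 f2) f14).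
- right; left; exact: (repr_set (@repr_T LW Z 3 H f5 f6) f7).
- right; left; exact: (repr_set (@repr_T LV Z 4 H f9 f10) f11).
- left; exact: (repr_set (@repr_S L0 Z 0 H f3) f4).
- right; right; exact: (repr_set (@repr_S LW Z 3 H f8) f15).
- right; right; exact: (repr_set (@repr_S LV Z 0 H f12) f13).
Qed.

Lemma Inv_apply X Z : Inv Z -> Inv (apply_ops X Z).
Proof.
rewrite /apply_ops; elim: X Z => [//|o X IH] Z H /=; apply: IH; exact: Inv_step.
Qed.

Lemma apply_rcons (E : Type) X o (Z : sform E) :
  apply_ops (X ++ [:: o]) Z = match o with OpT => opT (apply_ops X Z) | OpS => opS (apply_ops X Z) end.
Proof. rewrite /apply_ops; elim: X Z => [|o' X IH] Z //=. Qed.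

Lemma contained_S X : contained (X ++ [:: OpS]) X.
Proof.
move=> tx F _ x y; rewrite /pref apply_rcons /opS /induced /=.
case=> -[i Hi] /= h; exists i; exact: (h 0).
Qed.

Lemma nontrans L Z a b c :
  repr L Z ->
  uni L a b && ~~ uni L b a -> uni L b c && ~~ uni L c b -> ~~ (uni L a c && ~~ uni L c a) ->
  a < 4 -> b < 4 -> c < 4 -> ~ transitive_rel (strict_part (induced Z)).
Proof.
move=> H hab hbc hac ha hb hc Ht.
have E : forall (u v : nat) (hu : u < 4) (hv : v < 4),
    induced Z (tup (Ordinal hu)) (tup (Ordinal hv)) <-> uni L u v.
  by move=> u v hu hv; rewrite (@induced_repr _ _ _ _ H).
have S : forall (u v : nat) (hu : u < 4) (hv : v < 4),
    strict_part (induced Z) (tup (Ordinal hu)) (tup (Ordinal hv)) <-> uni L u v && ~~ uni L v u.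
  move=> u v hu hv; rewrite /strict_part (E u v hu hv) (E v u hv hu); split.
  - by case=> -> /negP.
  - by case/andP => -> /negP.
move: (Ht _ _ _ (proj2 (S a b ha hb) hab) (proj2 (S b c hb hc) hbc)).
by move/(S a c ha hc); apply/negP.
Qed.

Theorem mainTheorem9 : forall X : list op, ~ (transitive_seq X /\ minimal_seq X).
Proof.
move=> X [Htr Hmin].
have HI : Inv (apply_ops X (of_formula F0)) := Inv_apply X (or_introl init_repr).
have Htr' := Htr tx4 F0 wfF0; rewrite /pref in Htr'.
case: HI => [H|[H|H]].
- by apply: (nontrans (a := 1) (b := 2) (c := 3) H) => //; vm_compute.
- apply: Hmin; exists (X ++ [:: OpS]); split; last exact: contained_S.
  case=> _ Hc.
  have := Hc tx4 F0 wfF0 (tup o1) (tup o2); rewrite /pref apply_rcons.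
  have HV := repr_set (@repr_S _ _ 3 H f8) f15.
  rewrite (@induced_repr _ _ _ _ H) (@induced_repr _ _ _ _ HV).
  by vm_compute => /(_ erefl).
- by apply: (nontrans (a := 0) (b := 2) (c := 1) H) => //; vm_compute.
Qed.
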